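(* Let $A=[a_{ij}]$ be the adjacency matrix of a strongly connected, aperiodic directed graph on $\mathcal X=\{1,\ldots,n\}$ with $a_{nn}=1$, and let $N\ge1$ be such that all entries of $A^N$ are positive. Let $\lambda_A$, $u,v>0$ with $A^Tu=\lambda_Au$, $Av=\lambda_Av$, $\sum_iu_iv_i=1$, $\nu_{RB}(i)=u_iv_i$, $r_{ij}=\frac{v_j}{\lambda_Av_i}a_{ij}$, and $\mathfrak M_{\rm RB}(x_0,\ldots,x_N)=\nu_{RB}(x_0)r_{x_0x_1}\cdots r_{x_{N-1}x_N}$. Let $\mathfrak M^*[\delta_1,\delta_n]$ be the minimizer of $\mathbb D(P\|\mathfrak M_{\rm RB})$ over all probability distributions $P$ on $\mathcal X^{N+1}$ whose marginal at time $0$ is the point mass at node $1$ and whose marginal at time $N$ is the point mass at node $n$. Then $\mathfrak M^*[\delta_1,\delta_n]$ assigns probability $1/(A^N)_{1n}$ to each of the feasible paths of length $N$ from $1$ to $n$, i.e. to each $(x_0,\ldots,x_N)$ with $x_0=1$, $x_N=n$ and $a_{x_tx_{t+1}}=1$ for $t=0,\ldots,N-1$.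
   Context: Relative entropy of a probability distribution $P$ with respect to a nonnegative measure $Q$ on a finite set: $\mathbb D(P\|Q)=\sum_x P(x)\log\frac{P(x)}{Q(x)}$ if $\mathrm{supp}(P)\subseteq\mathrm{supp}(Q)$ (with $0\log0=0$), and $+\infty$ otherwise. *)

(* Defs.v *)
From HB Require Import structures.
From mathcomp Require Import all_boot all_order all_algebra.
From mathcomp Require Import all_classical all_reals exp.
Set Implicit Arguments. Unset Strict Implicit. Unset Printing Implicit Defensive.
Import Order.TTheory GRing.Theory Num.Theory.
Local Open Scope ring_scope.

(* Nodes: 'I_n.+1 (= {1,...,n+1} shifted to {0,...,n}); node "1" is ord0,
   node "n" (the last node) is ord_max.  Paths of length N: functions
   'I_N.+1 -> 'I_n.+1 (times 0..N). *)

Definition path_t (n N : nat) := {ffun 'I_N.+1 -> 'I_n.+1}.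

Definition is_adjacency (R : numDomainType) n (A : 'M[R]_n.+1) :=
  forall i j, A i j = 0 \/ A i j = 1.

Definition strongly_connected (R : numDomainType) n (A : 'M[R]_n.+1) :=
  forall i j, exists k : nat, 0 < (A ^+ k) i j.

Definition aperiodic (R : numDomainType) n (A : 'M[R]_n.+1) :=
  forall (i : 'I_n.+1) (d : nat),
    (forall k : nat, (0 < k)%N -> 0 < (A ^+ k) i i -> (d %| k)%N) -> d = 1%N.

Definition is_prob (R : numDomainType) (T : finType) (P : {ffun T -> R}) :=
  (forall x, 0 <= P x) /\ \sum_(x : T) P x = 1.

Definition rel_entropy (R : realType) (T : finType) (P Q : {ffun T -> R})
  : \bar R :=
  if [forall x, (P x != 0) ==> (Q x != 0)]
  then (\sum_(x : T) (if P x == 0 then 0 else P x * ln (P x / Q x)))%:E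
  else +oo%E.

Definition M_RB (R : realType) n N (A : 'M[R]_n.+1) (lam : R)
  (u v : 'cV[R]_n.+1) : {ffun path_t n N -> R} :=
  [ffun x : path_t n N =>
     (u (x ord0) 0 * v (x ord0) 0) *
     \prod_(t < N) (v (x (inord t.+1)) 0 / (lam * v (x (inord t)) 0)
                      * A (x (inord t)) (x (inord t.+1)))].

Definition marginal (R : numDomainType) n N (P : {ffun path_t n N -> R})
  (t : 'I_N.+1) (i : 'I_n.+1) : R :=
  \sum_(x : path_t n N | x t == i) P x.

Definition bridge_feasible (R : numDomainType) n N
  (P : {ffun path_t n N -> R}) :=
  is_prob P /\
  (forall i, marginal P ord0 i = (i == ord0)%:R) /\
  (forall i, marginal P ord_max i = (i == ord_max)%:R).

Definition is_bridge_minimizer (R : realType) n N (Q P : {ffun path_t n N -> R}) :=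
  bridge_feasible P /\
  forall P' : {ffun path_t n N -> R}, bridge_feasible P' ->
    (rel_entropy P Q <= rel_entropy P' Q)%E.

Definition feasible_path (R : numDomainType) n N (A : 'M[R]_n.+1) (x : path_t n N) :=
  x ord0 = ord0 /\ x ord_max = ord_max /\
  forall t : 'I_N, A (x (inord t)) (x (inord t.+1)) = 1.

(* Main.v *)
Require Import Defs.
From HB Require Import structures.
From mathcomp Require Import all_boot all_order all_algebra.
From mathcomp Require Import all_classical all_reals exp.
From mathcomp Require Import ring lra.
Import Order.TTheory GRing.Theory Num.Theory.
Local Open Scope ring_scope.

Lemma inord_max' N : inord N = (ord_max : 'I_N.+1).
Proof. by apply: val_inj; rewrite /= inordK. Qed.

Lemma inord_0' N : inord 0 = (ord0 : 'I_N.+1).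
Proof. by apply: val_inj; rewrite /= inordK. Qed.

Definition ext_path (T : finType) N (y : {ffun 'I_N.+1 -> T}) (k : T)
  : {ffun 'I_N.+2 -> T} :=
  [ffun t : 'I_N.+2 => if (t < N.+1)%N then y (inord t) else k].

Arguments ext_path {T N}.

Lemma ext_path_bij (T : finType) N :
  bijective (fun p : {ffun 'I_N.+1 -> T} * T => ext_path p.1 p.2).
Proof.
exists (fun x : {ffun 'I_N.+2 -> T} => ([ffun t : 'I_N.+1 => x (inord t)], x ord_max)).
- move=> [y k] /=; congr pair; last by rewrite ffunE /= ltnn.
  apply/ffunP => t; rewrite /ext_path !ffunE inordK; last by rewrite ltnS ltnW.
  by rewrite ltn_ord inord_val.
- move=> x; apply/ffunP => t; rewrite /ext_path !ffunE.
  case: ifP => ht; first by rewrite inordK // inord_val.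
  rewrite /=; congr (x _); apply: val_inj => /=.
  by have := ltn_ord t; rewrite ltnS leq_eqVlt ht orbF => /eqP.
Qed.

Lemma count_paths (R : comPzRingType) n (A : 'M[R]_n.+1) N (i j : 'I_n.+1) :
  \sum_(x : {ffun 'I_N.+1 -> 'I_n.+1} | (x ord0 == i) && (x ord_max == j))
     \prod_(t < N) A (x (inord t)) (x (inord t.+1)) = (A ^+ N) i j.
Proof.
elim: N j => [|N IH] j.
  rewrite expr0 mxE.
  have E : forall x : {ffun 'I_1 -> 'I_n.+1}, x ord_max = x ord0.
    by move=> x; congr (x _); apply: val_inj.
  case: (eqVneq i j) => [<-|nij].
    rewrite (bigD1 [ffun=> i]) /=; last by rewrite !ffunE eqxx.
    rewrite big_ord0 big1 ?addr0 //.
    move=> x /andP[/andP[/eqP x0 _] xn]; case/eqP: xn; apply/ffunP => t.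
    by rewrite ffunE (ord1 t).
  rewrite big1 //.
  move=> x /andP[/eqP x0]; rewrite E x0 => /eqP ij; by rewrite ij eqxx in nij.
rewrite (reindex _ (onW_bij _ (@ext_path_bij _ N))) /=.
rewrite (eq_bigl (fun p : {ffun 'I_N.+1 -> 'I_n.+1} * 'I_n.+1 => (p.1 ord0 == i) && (p.2 == j))); last first.
  move=> [y k] /=; rewrite !ffunE /= ltnn /=.
  by rewrite inord_0'.
rewrite -(pair_big (fun y : {ffun 'I_N.+1 -> 'I_n.+1} => y ord0 == i) (fun k => k == j) (fun y k => \prod_(t < N.+1) A (ext_path y k (inord t)) (ext_path y k (inord t.+1)))) /=.
rewrite (eq_bigr (fun y : {ffun 'I_N.+1 -> 'I_n.+1} => \prod_(t < N) A (y (inord t)) (y (inord t.+1)) * A (y ord_max) j)); last first.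
  move=> y _; rewrite big_pred1_eq big_ord_recr /=; congr (_ * _).
    apply: eq_bigr => t _; have tN := ltn_ord t.
    have h1 : (t < N.+2)%N by rewrite ltnS ltnW // ltnW.
    have h2 : (t.+1 < N.+2)%N by rewrite ltnS ltnW.
    rewrite /ext_path !ffunE !inordK //.
    by rewrite !ltnS (ltnW tN) tN.
  rewrite /ext_path !ffunE !inordK ?ltnn // ltnSn inord_max'.
  by [].
rewrite (partition_big (fun y : {ffun 'I_N.+1 -> 'I_n.+1} => y ord_max) predT) //=.
rewrite exprSr mxE; apply: eq_bigr => l _.
rewrite -IH big_distrl /=; apply: eq_bigr => y /andP[_ /eqP ->] //.
Qed.


Lemma telescope (R : fieldType) (lam : R) (f : nat -> R) N :
  (forall t, f t != 0) ->
  \prod_(t < N) (f t.+1 / (lam * f t)) = lam^-1 ^+ N * (f N / f 0).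
Proof.
move=> fn0.
rewrite (eq_bigr (fun t : 'I_N => lam^-1 * (f t.+1 * (f t)^-1))); last first.
  by move=> t _; rewrite invfM mulrCA.
rewrite big_split /= prodr_const card_ord big_split /= prodfV.
congr (_ * _).
have h : f 0 * \prod_(t < N) f t.+1 = \prod_(t < N) f t * f N.
  by rewrite -(big_ord_recl N (fun t => f t)) -(big_ord_recr N (fun t => f t)).
have p0 : \prod_(t < N) f t != 0 by apply/prodf_neq0 => t _.
apply: (mulfI (fn0 0%N)); rewrite mulrA h.
by field; rewrite p0 fn0.
Qed.

Arguments telescope {R}.

Lemma prodA_ind (R : numDomainType) n N (A : 'M[R]_n.+1) (x : path_t n N) :
  is_adjacency A ->
  \prod_(t < N) A (x (inord t)) (x (inord t.+1)) =
  ([forall t : 'I_N, A (x (inord t)) (x (inord t.+1)) == 1])%:R.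
Proof.
move=> adj; case: (boolP [forall t : 'I_N, _]) => [/forallP h|].
  by rewrite big1 // => t _; apply/eqP.
move=> /forallPn [t nt].
rewrite (bigD1 t) //=.
by case: (adj (x (inord t)) (x (inord t.+1))) => e; [rewrite e mul0r | rewrite e eqxx in nt].
Qed.

Definition gfun (R : realType) (K p : R) :=
  (if p == 0 then 0 else p * ln (K * p)) - p + K^-1.

Arguments gfun {R}.

Lemma ln_le_sub1 (R : realType) (z : R) : 0 < z -> ln z <= z - 1.
Proof.
move=> z0; have := expR_ge1Dx (ln z); rewrite lnK ?posrE //.
by move=> h; rewrite lerBrDl.
Qed.

Lemma ln_lt_sub1 (R : realType) (z : R) : 0 < z -> z != 1 -> ln z < z - 1.
Proof.
move=> z0 z1; have : ln z != 0 by rewrite ln_eq0.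
move=> /expR_gt1Dx; rewrite lnK ?posrE //.
by move=> h; rewrite ltrBrDl.
Qed.

Arguments ln_le_sub1 {R z}.
Arguments ln_lt_sub1 {R z}.

Lemma gfun_pos (R : realType) (K p : R) : 0 < K -> 0 < p ->
  gfun K p = p * ((K * p)^-1 - 1 - ln ((K * p)^-1)).
Proof.
move=> K0 p0; rewrite /gfun (negbTE (lt0r_neq0 p0)).
rewrite lnV ?posrE ?mulr_gt0 //.
field; rewrite ?lt0r_neq0 //.
Qed.

Lemma gfun_ge0 (R : realType) (K p : R) : 0 < K -> 0 <= p -> 0 <= gfun K p.
Proof.
move=> K0; rewrite le0r => /orP[/eqP->|p0].
  by rewrite /gfun eqxx subr0 add0r invr_ge0 ltW.
rewrite gfun_pos //; apply: mulr_ge0; first exact: ltW.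
have kp : 0 < (K * p)^-1 by rewrite invr_gt0 mulr_gt0.
by rewrite subr_ge0 (ln_le_sub1 kp).
Qed.

Lemma gfun_eq0 (R : realType) (K p : R) : 0 < K -> 0 <= p -> gfun K p = 0 -> p = K^-1.
Proof.
move=> K0; rewrite le0r => /orP[/eqP->|p0].
  rewrite /gfun eqxx subr0 add0r => /eqP; rewrite invr_eq0 => /eqP K00.
  by move: K0; rewrite K00 ltxx.
rewrite gfun_pos // => /eqP; rewrite mulf_eq0 (gt_eqF p0) /= => /eqP h.
have kp : 0 < (K * p)^-1 by rewrite invr_gt0 mulr_gt0.
case: (eqVneq ((K * p)^-1) 1) => [e|ne].
  by move/(congr1 GRing.inv): e; rewrite invrK invr1 => e; by rewrite -[p](mulKf (lt0r_neq0 K0)) e mulr1.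
have := ln_lt_sub1 kp ne; rewrite -subr_gt0 h ltxx //.
Qed.

Lemma gfun_inv (R : realType) (K : R) : 0 < K -> gfun K K^-1 = 0.
Proof.
move=> K0; rewrite /gfun invr_eq0 (negbTE (lt0r_neq0 K0)) divff ?lt0r_neq0 // ln1.
by rewrite mulr0 sub0r addNr.
Qed.


Lemma M_on (R : realType) n N (A : 'M[R]_n.+1) lam (u v : 'cV[R]_n.+1)
  (x : path_t n N) : (forall i, 0 < v i 0) -> x ord0 = ord0 -> x ord_max = ord_max ->
  M_RB N A lam u v x = u ord0 0 * v ord_max 0 * lam^-1 ^+ N *
     \prod_(t < N) A (x (inord t)) (x (inord t.+1)).
Proof.
move=> vp h0 hN; rewrite ffunE big_split /=.
rewrite (telescope lam (fun t => v (x (inord t)) 0)); last by move=> t; rewrite lt0r_neq0.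
rewrite inord_max' inord_0' h0 hN.
have v0 : v ord0 0 != 0 by rewrite lt0r_neq0.
by field.
Qed.

Lemma powv (R : realType) n (A : 'M[R]_n.+1) lam (v : 'cV[R]_n.+1) k :
  A *m v = lam *: v -> A ^+ k *m v = lam ^+ k *: v.
Proof.
move=> Hv; elim: k => [|k IH]; first by rewrite !expr0 scale1r mul1mx.
by rewrite exprSr -mulmxE -mulmxA Hv -scalemxAr IH scalerA exprSr mulrC.
Qed.

Theorem proposition5p4 (R : realType) (n N : nat) (A : 'M[R]_n.+1)
  (lam : R) (u v : 'cV[R]_n.+1) :
  is_adjacency A -> strongly_connected A -> aperiodic A ->
  A ord_max ord_max = 1 ->
  (1 <= N)%N -> (forall i j, 0 < (A ^+ N) i j) ->
  (forall i, 0 < u i 0) -> (forall i, 0 < v i 0) ->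
  A^T *m u = lam *: u -> A *m v = lam *: v ->
  \sum_(i < n.+1) u i 0 * v i 0 = 1 ->
  (exists P, is_bridge_minimizer (M_RB N A lam u v) P) /\
  (forall P, is_bridge_minimizer (M_RB N A lam u v) P ->
     forall x : path_t n N, feasible_path A x ->
       P x = ((A ^+ N) ord0 ord_max)^-1).
Proof.
move=> adj _ _ _ N1 AN up vp Hu Hv Huv.
set K := (A ^+ N) ord0 ord_max.
have K0 : 0 < K := AN _ _.
have lamN : 0 < lam ^+ N.
  have := congr1 (fun M : 'cV[R]_n.+1 => M ord0 0) (@powv _ _ _ _ _ N Hv).
  rewrite /= !mxE => e.
  have : 0 < \sum_j (A ^+ N) ord0 j * v j 0.
    rewrite (bigD1 ord0) //=.
    have h1 : 0 < (A ^+ N) ord0 ord0 * v ord0 0 by rewrite mulr_gt0.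
    apply: (lt_le_trans h1); rewrite lerDl.
    by apply: sumr_ge0 => j _; rewrite mulr_ge0 // ltW.
  by rewrite e pmulr_lgt0.
set c := u ord0 0 * v ord_max 0 * lam^-1 ^+ N.
have c0 : 0 < c by rewrite !mulr_gt0 // exprVn invr_gt0.
set M := M_RB N A lam u v.
pose Fp := fun x : path_t n N => (x ord0 == ord0) && (x ord_max == ord_max)
   && [forall t : 'I_N, A (x (inord t)) (x (inord t.+1)) == 1].
have hMF : forall x : path_t n N, Fp x -> M x = c.
  move=> x /andP[/andP[/eqP h0 /eqP hN] hf].
  by rewrite /M M_on // prodA_ind // hf mulr1.
have hMnF : forall x : path_t n N, x ord0 = ord0 -> x ord_max = ord_max -> ~~ Fp x -> M x = 0.
  move=> x h0 hN; rewrite /Fp h0 hN !eqxx /= => hf.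
  by rewrite /M M_on // prodA_ind // (negbTE hf) mulr0.
have hK : \sum_(x | Fp x) (1 : R) = K.
  rewrite /K -count_paths /Fp big_mkcondr /=; apply: eq_bigr => x _.
  by rewrite prodA_ind //; case: [forall t, _].
have sK : \sum_(x | Fp x) K^-1 = 1.
  rewrite (eq_bigr (fun x => 1 * K^-1)); last by move=> x _; rewrite mul1r.
  by rewrite -big_distrl /= hK divff // lt0r_neq0.
have supp : forall P : {ffun path_t n N -> R}, bridge_feasible P ->
    forall x : path_t n N, ~~ ((x ord0 == ord0) && (x ord_max == ord_max)) -> P x = 0.
  move=> P [[P0 _] [m0 mN]] x; rewrite negb_and => /orP[h|h].
    have := m0 (x ord0); rewrite (negbTE h) /marginal => e.
    by apply: (psumr_eq0P _ e) => // y _; apply: P0.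
  have := mN (x ord_max); rewrite (negbTE h) /marginal => e.
  by apply: (psumr_eq0P _ e) => // y _; apply: P0.
have suppF : forall P : {ffun path_t n N -> R}, bridge_feasible P ->
    [forall x, (P x != 0) ==> (M x != 0)] -> forall x : path_t n N, ~~ Fp x -> P x = 0.
  move=> P fP /forallP cP x nF.
  case: (boolP ((x ord0 == ord0) && (x ord_max == ord_max))) => [/andP[/eqP h0 /eqP hN]|hB].
    apply/eqP; apply: contraTT (cP x) => Pn; rewrite Pn /=.
    by rewrite hMnF // eqxx.
  exact: supp.
have L := ln (K * c).
have Ef : forall Q : {ffun path_t n N -> R}, (forall x, 0 <= Q x) ->
    (forall x, ~~ Fp x -> Q x = 0) -> \sum_x Q x = 1 ->
    \sum_x (if Q x == 0 then 0 else Q x * ln (Q x / M x)) =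
    \sum_(x | Fp x) gfun K (Q x) - ln (K * c).
  move=> Q Q0 QF Q1.
  rewrite (bigID Fp) /= [X in _ + X]big1 ?addr0; last by move=> x /QF ->; rewrite eqxx.
  have Q1' : \sum_(x | Fp x) Q x = 1.
    by rewrite -Q1 (bigID Fp predT) /= [X in _ = _ + X]big1 ?addr0 // => x /QF.
  rewrite (eq_bigr (fun x => gfun K (Q x) + Q x - K^-1 - Q x * ln (K * c))); last first.
    move=> x Fx; rewrite hMF // /gfun.
    case: (eqVneq (Q x) 0) => [Qe|Qn]; first by rewrite Qe; ring.
    have Qp : 0 < Q x by rewrite lt0r Qn Q0.
    have Qp' : Q x \is Num.pos by rewrite posrE.
    have cp' : c \is Num.pos by rewrite posrE.
    have Kp' : K \is Num.pos by rewrite posrE.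
    rewrite (ln_div Qp' cp') (lnM Kp' Qp') (lnM Kp' cp').
    by ring.
  rewrite !sumrB big_split /= Q1'.
  rewrite -big_distrl /= Q1' mul1r.
  rewrite sK; by ring.
pose U := [ffun x : path_t n N => if Fp x then K^-1 else 0].
have U0 : forall x, 0 <= U x by move=> x; rewrite ffunE; case: ifP => // _; rewrite invr_ge0 ltW.
have UF : forall x, ~~ Fp x -> U x = 0 by move=> x nF; rewrite ffunE (negbTE nF).
have U1 : \sum_x U x = 1.
  rewrite (eq_bigr (fun x => if Fp x then K^-1 else 0)); last by move=> x _; rewrite ffunE.
  by rewrite -big_mkcond /= sK.
have Ufeas : bridge_feasible U.
  split; first by split.
  have marg : forall (t : 'I_N.+1) (i0 : 'I_n.+1), (forall x, Fp x -> x t = i0) ->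
      forall i, marginal U t i = (i == i0)%:R.
    move=> t i0 h i; rewrite /marginal.
    rewrite (eq_bigr (fun x => if Fp x then K^-1 else 0)); last by move=> x _; rewrite ffunE.
    rewrite -big_mkcondr /=.
    case: (eqVneq i i0) => [->|ne].
      rewrite -sK; apply: eq_bigl => x.
      by case: (boolP (Fp x)) => [/h ->|]; rewrite ?eqxx ?andbF.
    rewrite big1 // => x /andP[/eqP xt /h]; rewrite xt => e.
    by rewrite e eqxx in ne.
  split; apply: marg => x /andP[/andP[/eqP ? /eqP ?] _] //.
have condU : [forall x, (U x != 0) ==> (M x != 0)].
  apply/forallP => x; apply/implyP; rewrite ffunE; case: ifP => [Fx _|]; last by rewrite eqxx.
  by rewrite hMF // lt0r_neq0.
have EU : rel_entropy U M = (- ln (K * c))%:E.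
  rewrite /rel_entropy condU Ef // big1 ?sub0r // => x Fx.
  by rewrite ffunE Fx gfun_inv.
split.
  exists U; split => // P' fP'.
  rewrite EU /rel_entropy; case: ifP => [cP|_]; last exact: leey.
  rewrite Ef; first last.
  - by case: fP' => [[_ ->]].
  - exact: suppF.
  - by case: fP' => [[]].
  rewrite lee_fin -subr_ge0 opprK subrK; apply: sumr_ge0 => x _.
  by apply: gfun_ge0 => //; case: fP' => [[]].
move=> P [fP minP] x [h0 [hN hA]].
have Fx : Fp x.
  by rewrite /Fp h0 hN !eqxx /=; apply/forallP => t; rewrite hA.
have := minP U Ufeas; rewrite EU /rel_entropy; case: ifP => [cP|_]; last by [].
have [[P0 P1] _] := fP.
rewrite Ef //; last exact: suppF.
rewrite lee_fin => hs0.
have hs : \sum_(y | Fp y) gfun K (P y) <= 0 by lra.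
have s0 : \sum_(y | Fp y) gfun K (P y) = 0.
  by apply/eqP; rewrite eq_le hs; apply: sumr_ge0 => y _; apply: gfun_ge0.
apply: gfun_eq0 => //.
by apply: (psumr_eq0P _ s0) => // y _; apply: gfun_ge0.
Qed.
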